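(* Assume the standing hypotheses (H). Let $Z_3$ be a set of exactly $\lfloor 2k_3/3\rfloor$ parts of size $3$ and $Z_4$ a set of exactly $\max\{0,\frac{k_1-k_3+k_4+1}{3}\}$ parts of size $4$ (under (H) this number is a nonnegative integer at most $k_4$). Let $M$ be a merging of $G$, with $t_3$ the number of parts of size $3$ containing a pair of $M$, satisfying: (P1) $t_3\ge k_3/3$; (P2) every part of size $4$ contains at least one pair of $M$; (P3) for every part $A$ and distinct $x,y,z\in A^*$: $|L(x)\cup L(y)\cup L(z)|\ge n-t_3-k_4$; (P4) for every part $A$ of size $3$ containing no pair of $M$ and all $x,y\in A^*$ with $x\neq y$: $|L(x)\cup L(y)|\ge k+k_3+k_4$; (P5) for every $A\in Z_3$ and distinct $x,y\in A^*$: $|L(x)\cup L(y)|\ge k+t_3+k_4$; (P6) for every part $A$ of size $3$ and distinct $x,y\in A^*$: $|L(x)\cup L(y)|\ge k+\frac{k_3}{3}+k_4$; (P7) for every $A\in Z_4$ and distinct $x,y\in A^*$: $|L(x)\cup L(y)|\ge k+k_4$; (P8) the family $(L(w))_{w}$ indexed by the merged vertices $w$ has a system of distinct representatives. Then the family $(L(x))_{x\in V^*}$ of all lists after merging has a system of distinct representatives (and hence $G$ has an $L$-coloring).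
   Context: A list assignment $L$ assigns to each vertex $v$ a set $L(v)$ of colors; an $L$-coloring is a proper coloring $f$ with $f(v)\in L(v)$ for all $v$; $\mathrm{ch}$ denotes choice number and $\chi$ chromatic number. A part of a complete multipartite graph is one of its maximal stable sets. Standing hypotheses (H): $k\ge1$ and $n\ge 2k+2$ are integers; $G$ is a complete $k$-partite graph (exactly $k$ nonempty parts) on $n$ vertices; $L$ is a list assignment for $G$ with $|L(v)|\ge\lceil (n+k-1)/3\rceil$ for every vertex $v$; $G$ has no $L$-coloring; $\left|\bigcup_{v\in V(G)}L(v)\right|\le n-1$; and every graph $H$ with fewer than $n$ vertices satisfies $\mathrm{ch}(H)\le\max\{\chi(H),\lceil(|V(H)|+\chi(H)-1)/3\rceil\}$. For $i\in\{1,2,3,4\}$, $k_i$ denotes the number of parts of $G$ of size $i$. A merging $M$ of $G$ is a collection of pairwise disjoint $2$-element sets of vertices, each contained in a single part. Merging replaces each pair $\{u,v\}\in M$ by a single new (merged) vertex $w$ with list $L(w)=L(u)\cap L(v)$; vertices in no pair of $M$ remain (unmerged) with their original lists. $V^*$ is the resulting vertex set, and for a part $A$, $A^*$ is the set of vertices of $V^*$ arising from $A$ (merged vertices from pairs in $A$ together with unmerged vertices of $A$). A system of distinct representatives (SDR) of a family $(X_i)_{i\in I}$ of sets is a choice of elements $x_i\in X_i$ that are pairwise distinct. *)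

(* Defs.v *)
From mathcomp Require Import all_boot.
Set Implicit Arguments. Unset Strict Implicit. Unset Printing Implicit Defensive.

Definition ceil_div (a b : nat) : nat := (a + b - 1) %/ b.

Definition proper_col (T : finType) (C : eqType) (e : rel T) (f : T -> C) : Prop :=
  forall x y, e x y -> f x != f y.

(* H is m-choosable: every list assignment with lists of size >= m admits
   a proper colouring from the lists.  ch(H) <= m  iff  H is m-choosable
   (the choice number is the least such m, and choosability is monotone). *)
Definition choosable (T : finType) (e : rel T) (m : nat) : Prop :=
  forall (C : finType) (L : T -> {set C}),
    (forall v, m <= #|L v|) ->
    exists f : T -> C, (forall v, f v \in L v) /\ proper_col e f.

Definition colorableb (T : finType) (e : rel T) (c : nat) : bool :=
  [exists f : {ffun T -> 'I_c}, [forall x, [forall y, e x y ==> (f x != f y)]]].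

(* chromatic number: least c (<= #|T|) such that H is c-colourable
   (for a loopless graph such a c always exists, so this is chi(H)). *)
Definition chi (T : finType) (e : rel T) : nat :=
  find (colorableb e) (iota 0 #|T|.+1).

Definition fiber (V : finType) (k : nat) (part : V -> 'I_k) (i : 'I_k) : {set V} :=
  [set v | part v == i].

Definition psize (V : finType) (k : nat) (part : V -> 'I_k) (i : 'I_k) : nat :=
  #|fiber part i|.

Definition kcount (V : finType) (k : nat) (part : V -> 'I_k) (j : nat) : nat :=
  #|[set i : 'I_k | psize part i == j]|.

(* ---- mergings: M is a set of 2-element vertex sets ---- *)

Definition Vstar (V : finType) (M : {set {set V}}) : {set {set V}} :=
  M :|: [set [set v] | v in ~: cover M].

Definition Lstar (V C : finType) (L : V -> {set C}) (X : {set V}) : {set C} :=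
  \bigcap_(v in X) L v.

Definition Astar (V : finType) (k : nat) (part : V -> 'I_k) (M : {set {set V}})
  (i : 'I_k) : {set {set V}} :=
  [set X in Vstar M | X \subset fiber part i].

Definition has_pair (V : finType) (k : nat) (part : V -> 'I_k) (M : {set {set V}})
  (i : 'I_k) : bool :=
  [exists X in M, X \subset fiber part i].

Definition t3 (V : finType) (k : nat) (part : V -> 'I_k) (M : {set {set V}}) : nat :=
  #|[set i : 'I_k | (psize part i == 3) && has_pair part M i]|.

(* Main.v *)
Require Import Defs.
From mathcomp Require Import all_boot zify.
Set Implicit Arguments. Unset Strict Implicit. Unset Printing Implicit Defensive.

Lemma hall (I C : finType) (c0 : C) (P : {set I}) (F : I -> {set C}) :
  (forall S : {set I}, S \subset P -> #|S| <= #|\bigcup_(i in S) F i|) ->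
  exists g : I -> C, (forall i, i \in P -> g i \in F i) /\ {in P &, injective g}.
Proof.
move: {2}#|P| (leqnn #|P|) => m.
elim: m P F => [|m IH] P F hP hH.
  exists (fun _ => c0); split=> [i iP|i j iP].
  - by move: hP; rewrite leqn0 cards_eq0 => /eqP P0; rewrite P0 inE in iP.
  - by move: hP; rewrite leqn0 cards_eq0 => /eqP P0; rewrite P0 inE in iP.
case: (boolP [exists S : {set I}, [&& S \subset P, S != set0, S != P &
      #|\bigcup_(i in S) F i| <= #|S|]]).
- case/existsP=> S /and4P [sSP S0 SP hS].
  set FS := \bigcup_(i in S) F i.
  have ltS : #|S| < #|P| by apply: proper_card; rewrite properEneq SP sSP.
  have [g1 [g1F g1i]] : exists g : I -> C, (forall i, i \in S -> g i \in F i) /\ {in S &, injective g}.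
    apply: IH; first by lia.
    by move=> T sTS; apply: hH; apply: subset_trans sTS sSP.
  have [g2 [g2F g2i]] : exists g : I -> C, (forall i, i \in P :\: S -> g i \in F i :\: FS)
       /\ {in P :\: S &, injective g}.
    apply: IH.
      have: 0 < #|S| by rewrite card_gt0.
      have := cardsD P S; rewrite (setIidPr sSP); lia.
    move=> T sTPS.
    have sTP : T \subset P by apply: subset_trans sTPS (subsetDl _ _).
    have dTS : [disjoint T & S].
      by rewrite -setI_eq0; apply/eqP/setP=> x; rewrite !inE; apply/andP=> -[xT xS];
         move/subsetP: sTPS => /(_ x xT); rewrite inE xS.
    have hTS : #|T :|: S| <= #|\bigcup_(i in T :|: S) F i| by apply: hH; rewrite subUset sTP sSP.
    move: hTS; rewrite bigcup_setU cardsU (disjoint_setI0 dTS) cards0 subn0.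
    have -> : \bigcup_(i in T) (F i :\: FS) = (\bigcup_(i in T) F i) :\: FS.
      apply/setP=> x; rewrite inE; apply/bigcupP/andP.
      - by case=> i iT; rewrite inE => /andP [xF xi]; split=> //; apply/bigcupP; exists i.
      - by case=> xF /bigcupP [i iT xi]; exists i => //; rewrite inE xF xi.
    have := cardsU (\bigcup_(i in T) F i) FS.
    have := cardsD (\bigcup_(i in T) F i) FS.
    idtac.
    fold FS => h1 h2 h3; have := subset_leq_card (subsetIl (\bigcup_(i in T) F i) FS); have := subset_leq_card (subsetIr (\bigcup_(i in T) F i) FS); have hS2 : #|FS| <= #|S| := hS; lia.
  exists (fun i => if i \in S then g1 i else g2 i); split.
  - move=> i iP; case: ifP => iS; first by apply: g1F.
    by have := g2F i; rewrite inE iS iP => /(_ isT); rewrite inE => /andP [].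
  - move=> i j iP jP /=.
    case: ifP => iS; case: ifP => jS.
    + exact: g1i.
    + move=> e; have := g2F j; rewrite inE jS jP => /(_ isT); rewrite inE -e.
      by have := g1F i iS => h; rewrite (_ : g1 i \in FS) //; apply/bigcupP; exists i.
    + move=> e; have := g2F i; rewrite inE iS iP => /(_ isT); rewrite inE e.
      by have := g1F j jS => h; rewrite (_ : g1 j \in FS) //; apply/bigcupP; exists j.
    + by apply: g2i; rewrite inE ?iS ?jS ?iP ?jP.
- rewrite negb_exists => /forallP hS.
  case: (set_0Vmem P) => [P0|[i0 i0P]].
    by exists (fun _ => c0); split=> [i|i j]; rewrite P0 inE.
  have : 0 < #|F i0|.
    have := hH [set i0]; rewrite sub1set i0P big_set1 cards1; exact.
  case/card_gt0P=> a aF.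
  have [g' [g'F g'i]] : exists g : I -> C, (forall i, i \in P :\ i0 -> g i \in F i :\ a)
       /\ {in P :\ i0 &, injective g}.
    apply: IH.
      by have := cardsD1 i0 P; rewrite i0P; lia.
    move=> T sT.
    have sTP : T \subset P by apply: subset_trans sT (subsetDl _ _).
    case: (set_0Vmem T) => [->|[j jT]]; first by rewrite cards0.
    have TP : T != P.
      apply/eqP=> e; move/subsetP: sT => /(_ i0); rewrite e i0P !inE eqxx => /(_ isT) //.
    have T0 : T != set0 by apply/set0Pn; exists j.
    have := hS T; rewrite sTP TP T0 /= -ltnNge => hlt.
    have -> : \bigcup_(i in T) (F i :\ a) = (\bigcup_(i in T) F i) :\ a.
      apply/setP=> x; rewrite !inE; apply/bigcupP/andP.
      - by case=> i iT; rewrite !inE => /andP [xF xi]; split=> //; apply/bigcupP; exists i.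
      - by case=> xF /bigcupP [i iT xi]; exists i => //; rewrite !inE xF xi.
    have := cardsD1 a (\bigcup_(i in T) F i); case: (a \in _); lia.
  exists (fun i => if i == i0 then a else g' i); split.
  - move=> i iP; case: eqP => [->//|/eqP ne].
    by have := g'F i; rewrite !inE ne iP => /(_ isT) /andP [].
  - move=> i j iP jP /=.
    case: eqP => [->|/eqP ni]; case: eqP => [->//|/eqP nj].
    + move=> e; have := g'F j; rewrite !inE nj jP -e eqxx; by move/(_ isT).
    + move=> e; have := g'F i; rewrite !inE ni iP e eqxx; by move/(_ isT).
    + by apply: g'i; rewrite !inE ?ni ?nj ?iP ?jP.
Qed.

Lemma chi_le (T : finType) (e : rel T) p : colorableb e p -> chi e <= p.
Proof.
move=> hp; rewrite /chi.
case: (ltnP #|T| p) => hT.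
  by apply: leq_trans (find_size _ _) _; rewrite size_iota.
rewrite leqNgt; apply/negP => /(before_find 0).
by rewrite nth_iota // add0n hp.
Qed.

Lemma shift_ne (px py pi : nat) : px != pi -> py != pi -> px != py ->
  (if px < pi then px else px.-1) != (if py < pi then py else py.-1).
Proof. move=> /eqP h1 /eqP h2 /eqP h3; apply/eqP; case: ifP; case: ifP; lia. Qed.

Lemma recolor (k n : nat) (V C : finType) (part : V -> 'I_k) (L : V -> {set C})
  (hn : 2 * k + 2 <= n) (hV : #|V| = n)
  (hL : forall v, ceil_div (n + k - 1) 3 <= #|L v|)
  (hnocol : ~ exists f : V -> C,
      (forall v, f v \in L v) /\ (forall u v, part u != part v -> f u != f v))
  (hmin : forall (T : finType) (e : rel T), symmetric e -> irreflexive e ->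
      #|T| < n -> choosable e (maxn (chi e) (ceil_div (#|T| + chi e - 1) 3)))
  (X : {set V}) (i : 'I_k) (a : C) :
  X \subset fiber part i -> (forall v, v \in X -> a \in L v) ->
  (3 <= #|X| \/ (X = fiber part i /\ 2 <= #|X|)) -> False.
Proof.
move=> sX aX hX.
have k0 : 0 < k := leq_ltn_trans (leq0n _) (ltn_ord i).
pose T := {v : V | v \notin X}.
pose e := [rel x y : T | part (val x) != part (val y)].
have esym : symmetric e by move=> x y /=; rewrite eq_sym.
have eirr : irreflexive e by move=> x /=; rewrite eqxx.
have cT : #|{: T}| = n - #|X|.
  rewrite card_sig -hV -(cardsC X).
  have -> : #|[pred x | x \notin X]| = #|~: X| by apply: eq_card => x; rewrite !inE.
  lia.
have X0 : 2 <= #|X| by case: hX => [|[]]; lia.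
have [p [hp1 [hp2 hp3]]] : exists p, colorableb e p /\ p <= k /\ p + 3 <= k + #|X|.
  case: hX => [h3|[eX h2]].
    exists k; split; last by split; lia.
    apply/existsP; exists [ffun t : T => part (val t)].
    by apply/forallP => x; apply/forallP => y; apply/implyP; rewrite !ffunE.
  have hg : forall t : T, (if part (val t) < i then nat_of_ord (part (val t))
        else (part (val t)).-1) < k.-1.
    move=> t; have : val t \notin fiber part i by rewrite -eX; exact: valP t.
    rewrite inE => hne.
    have := ltn_ord (part (val t)); have := ltn_ord i.
    have : nat_of_ord (part (val t)) != nat_of_ord i by [].
    case: ifP; lia.
  exists k.-1; split; last by split; lia.
  apply/existsP; exists [ffun t : T => Ordinal (hg t)].
  apply/forallP => x; apply/forallP => y; apply/implyP; rewrite !ffunE /=.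
  move=> hne; apply/negP => /eqP [] /=.
  have : val x \notin fiber part i by rewrite -eX; exact: valP x.
  have : val y \notin fiber part i by rewrite -eX; exact: valP y.
  rewrite !inE => hy hx.
  apply/eqP/shift_ne => //; by rewrite (inj_eq val_inj).
have hchi := chi_le hp1.
have hc := hL.
set c := ceil_div (n + k - 1) 3 in hc.
have ck : k + 1 <= c by rewrite /c /ceil_div; lia.
have hm : maxn (chi e) (ceil_div (#|{: T}| + chi e - 1) 3) <= c - 1.
  rewrite geq_max; apply/andP; split; first by lia.
  rewrite /c /ceil_div; rewrite cT.
  lia.
have hT : #|{: T}| < n by rewrite cT; lia.
have hl : forall t : T, maxn (chi e) (ceil_div (#|{: T}| + chi e - 1) 3) <= #|L (val t) :\ a|.
  move=> t; apply: leq_trans hm _.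
  have := cardsD1 a (L (val t)); have := hc (val t); case: (a \in _); lia.
have [f [fL fP]] := hmin T e esym eirr hT C (fun t => L (val t) :\ a) hl.
apply: hnocol.
exists (fun v => if insub v is Some t then f t else a); split.
  move=> v; case: insubP => [t _ vt|]; last by rewrite negbK; apply: aX.
  by rewrite -vt; have /setD1P [] := fL t.
move=> u v puv.
case: insubP => [tu _ ut|]; case: insubP => [tv _ vt|].
- by have := fP tu tv; rewrite /= ut vt => /(_ puv).
- rewrite negbK => vX; by have /setD1P [] := fL tu.
- rewrite negbK => uX; have /setD1P [h _] := fL tv; by rewrite eq_sym.
- rewrite !negbK => vX uX; move/subsetP: sX => sX.
  by move: puv; have := sX _ uX; have := sX _ vX; rewrite !inE => /eqP -> /eqP ->; rewrite eqxx.
Qed.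

Lemma sum_count (T : finType) (A : {pred T}) (P : pred T) :
  \sum_(x in A) (P x : nat) = #|[set x in A | P x]|.
Proof.
rewrite -sum1dep_card big_mkcondr /=; apply: eq_bigr => x _; by case: (P x).
Qed.

Lemma cardsU_le (T : finType) (A B : {set T}) : #|A :|: B| <= #|A| + #|B|.
Proof. rewrite cardsU; lia. Qed.

Lemma sum_psize (V : finType) (k : nat) (part : V -> 'I_k) :
  \sum_i psize part i = #|V|.
Proof.
rewrite /psize /fiber.
have -> : \sum_i #|[set v | part v == i]| = \sum_i \sum_v (part v == i : nat).
  by apply: eq_bigr => i _; rewrite sum_count; apply: eq_card => v; rewrite !inE.
rewrite exchange_big /= -sum1_card; apply: eq_bigr => v _.
rewrite sum_count (_ : [set x in predT | part v == x] = [set part v]) ?cards1 //.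
by apply/setP => j; rewrite !inE eq_sym.
Qed.

Lemma sum_by_size (V : finType) (k : nat) (part : V -> 'I_k) (g : nat -> nat) :
  (forall i, psize part i <= 4) ->
  \sum_i g (psize part i) = \sum_(j < 5) g j * kcount part j.
Proof.
move=> h4.
have -> : \sum_i g (psize part i) = \sum_i \sum_(j < 5) (psize part i == j : nat) * g j.
  apply: eq_bigr => i _; rewrite !big_ord_recr big_ord0 /=.
  have := h4 i; case: (psize part i) => [|[|[|[|[|?]]]]] //= _; lia.
rewrite exchange_big /=; apply: eq_bigr => j _.
by rewrite -big_distrl /= sum_count mulnC /kcount; congr (_ * _); apply: eq_card => i; rewrite !inE.
Qed.

Lemma dcount (V C : finType) (L : V -> {set C}) (A : {set V}) (U : {set C}) :
  (forall v, L v \subset U) ->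
  (forall a, #|[set v in A | a \in L v]| <= 2) ->
  \sum_(v in A) #|L v| <= 2 * #|U|.
Proof.
move=> hU h2.
have -> : \sum_(v in A) #|L v| = \sum_(v in A) \sum_(a in U) (a \in L v : nat).
  apply: eq_bigr => v _; rewrite sum_count; apply: eq_card => a; rewrite !inE.
  by case aL: (a \in L v); rewrite ?andbF ?andbT // (subsetP (hU v)).
rewrite exchange_big /= mulnC -sum_nat_const; apply: leq_sum => a _.
by rewrite sum_count; apply: leq_trans (h2 a); apply: subset_leq_card; apply/subsetP => v; rewrite !inE.
Qed.

Lemma ar_two a b c : a <= b -> b + 1 <= c -> b + a <= 2 * c.
Proof. lia. Qed.

Lemma ar_34 p : 1 <= p -> p <= 4 -> p != 1 -> p != 2 -> p = 3 \/ p = 4.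
Proof. move=> ? ? /eqP ? /eqP ?; lia. Qed.

Lemma ar_C s k d k3 k4 z3 u : s <= k + d -> d <= k3 - z3 + k4 -> z3 = (2 * k3) %/ 3 ->
  3 * k + k3 + 3 * k4 <= 3 * u -> s <= u.
Proof. lia. Qed.

Lemma ar_E s k d k1 k2 k3 k4 z4 n c u : s <= k + d -> d <= k4 - z4 ->
  3 * z4 = k1 + k4 + 1 - k3 -> k = k1 + k2 + k3 + k4 ->
  n = k1 + 2 * k2 + 3 * k3 + 4 * k4 -> n + k - 1 <= 3 * c -> k + 1 <= c -> c <= u -> s <= u.
Proof. lia. Qed.

Theorem lemma18 (k n : nat) (V C : finType) (part : V -> 'I_k)
  (L : V -> {set C}) (Z3 Z4 : {set 'I_k}) (M : {set {set V}})
  (* standing hypotheses (H) *)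
  (hk : 1 <= k)
  (hn : 2 * k + 2 <= n)
  (hV : #|V| = n)
  (hparts : forall i : 'I_k, exists v : V, part v = i)
  (hL : forall v, ceil_div (n + k - 1) 3 <= #|L v|)
  (hnocol : ~ exists f : V -> C,
      (forall v, f v \in L v) /\ (forall u v, part u != part v -> f u != f v))
  (hunion : #|\bigcup_(v : V) L v| <= n - 1)
  (hmin : forall (T : finType) (e : rel T), symmetric e -> irreflexive e ->
      #|T| < n -> choosable e (maxn (chi e) (ceil_div (#|T| + chi e - 1) 3)))
  (* Z_3 and Z_4 *)
  (hZ3 : Z3 \subset [set i | psize part i == 3])
  (hZ3c : #|Z3| = (2 * kcount part 3) %/ 3)
  (hZ4 : Z4 \subset [set i | psize part i == 4])
  (hZ4c : 3 * #|Z4| = (kcount part 1 + kcount part 4 + 1) - kcount part 3)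
  (* M is a merging *)
  (hM : forall X, X \in M -> #|X| = 2 /\ exists i, X \subset fiber part i)
  (hMdisj : trivIset M)
  (* (P1) *)
  (P1 : kcount part 3 <= 3 * t3 part M)
  (* (P2) *)
  (P2 : forall i, psize part i = 4 -> has_pair part M i)
  (* (P3) *)
  (P3 : forall i x y z, x \in Astar part M i -> y \in Astar part M i ->
      z \in Astar part M i -> x != y -> x != z -> y != z ->
      n - t3 part M - kcount part 4 <= #|Lstar L x :|: Lstar L y :|: Lstar L z|)
  (* (P4) *)
  (P4 : forall i x y, psize part i = 3 -> ~~ has_pair part M i ->
      x \in Astar part M i -> y \in Astar part M i -> x != y ->
      k + kcount part 3 + kcount part 4 <= #|Lstar L x :|: Lstar L y|)
  (* (P5) *)
  (P5 : forall i x y, i \in Z3 ->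
      x \in Astar part M i -> y \in Astar part M i -> x != y ->
      k + t3 part M + kcount part 4 <= #|Lstar L x :|: Lstar L y|)
  (* (P6) : |L(x) u L(y)| >= k + k_3/3 + k_4, multiplied by 3 *)
  (P6 : forall i x y, psize part i = 3 ->
      x \in Astar part M i -> y \in Astar part M i -> x != y ->
      3 * k + kcount part 3 + 3 * kcount part 4 <= 3 * #|Lstar L x :|: Lstar L y|)
  (* (P7) *)
  (P7 : forall i x y, i \in Z4 ->
      x \in Astar part M i -> y \in Astar part M i -> x != y ->
      k + kcount part 4 <= #|Lstar L x :|: Lstar L y|)
  (* (P8) : SDR for the lists of merged vertices *)
  (P8 : exists g : {set V} -> C,
      (forall X, X \in M -> g X \in Lstar L X) /\ {in M &, injective g}) :
  exists g : {set V} -> C,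
    (forall X, X \in Vstar M -> g X \in Lstar L X) /\ {in Vstar M &, injective g}.
Proof.
set c := ceil_div (n + k - 1) 3.
have ck : k + 1 <= c by rewrite /c /ceil_div; lia.
have c3 : n + k - 1 <= 3 * c by rewrite /c /ceil_div; lia.
have hR := recolor hn hV hL hnocol hmin.
have no3 : forall i a, #|[set v in fiber part i | a \in L v]| <= 2.
  move=> i a; rewrite leqNgt; apply/negP => h3.
  apply: (hR [set v in fiber part i | a \in L v] i a).
  - by apply/subsetP => v; rewrite inE => /andP [].
  - by move=> v; rewrite inE => /andP [].
  - by left.
set U := \bigcup_(v in V) L v.
have LU : forall v, L v \subset U by move=> v; apply: (bigcup_sup v).
have Un : #|U| <= n - 1 by [].
have psz1 : forall i, 1 <= psize part i.
  move=> i; case: (hparts i) => v pv; rewrite /psize card_gt0; apply/set0Pn; exists v; by rewrite inE pv.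
have pszc : forall i, psize part i * c <= 2 * (n - 1).
  move=> i; have := dcount (A := fiber part i) LU (no3 i).
  have : \sum_(v in fiber part i) c <= \sum_(v in fiber part i) #|L v| by apply: leq_sum => v _; exact: hL.
  rewrite sum_nat_const -/(psize part i); lia.
have psz5 : forall i, psize part i <= 5.
  move=> i; rewrite leqNgt; apply/negP => h6.
  have := leq_mul h6 (leqnn c); have := pszc i; lia.
have sum5 : n <= 5 * k.
  rewrite -hV -(sum_psize part); apply: (@leq_trans (\sum_(i < k) 5)); first by apply: leq_sum => i _; exact: psz5.
  by rewrite sum_nat_const card_ord mulnC.
have psz4 : forall i, psize part i <= 4.
  move=> i; rewrite leqNgt; apply/negP => h5.
  have e5 : psize part i = 5 by have := psz5 i; lia.
  have := pszc i; rewrite e5; lia.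
have hkk : k = kcount part 1 + kcount part 2 + kcount part 3 + kcount part 4.
  have k0 : kcount part 0 = 0.
    apply/eqP; rewrite cards_eq0; apply/eqP/setP => i; rewrite !inE; have := psz1 i; by case: eqP => // ->.
  have := sum_by_size (fun _ => 1) psz4; rewrite sum_nat_const card_ord muln1 => hk'.
  rewrite !big_ord_recr big_ord0 /= k0 in hk'; lia.
have hnn : n = kcount part 1 + 2 * kcount part 2 + 3 * kcount part 3 + 4 * kcount part 4.
  have := sum_by_size (fun j => j) psz4; rewrite sum_psize hV => hn'.
  rewrite !big_ord_recr big_ord0 /= in hn'; lia.
have VM : forall X, X \in Vstar M -> X \in M \/ exists2 u, u \notin cover M & X = [set u].
  move=> X; rewrite /Vstar inE => /orP [->|/imsetP [u]]; first by left.
  by rewrite inE => uc ->; right; exists u.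
have Xpart : forall X, X \in Vstar M -> exists i, X \subset fiber part i.
  move=> X /VM [/hM [_ //]|[u _ ->]]; exists (part u); by rewrite sub1set inE.
have Xne : forall X, X \in Vstar M -> X != set0.
  move=> X /VM [/hM [h _]|[u _ ->]]; last by apply/set0Pn; exists u; rewrite inE.
  by apply/eqP => X0; rewrite X0 cards0 in h.
have notcov : forall u X, u \notin cover M -> X \in M -> u \notin X.
  move=> u X uc XM; apply: contra uc => uX; by apply/bigcupP; exists X.
have disj : forall X Y, X \in Vstar M -> Y \in Vstar M -> X != Y -> [disjoint X & Y].
  move=> X Y /VM [XM|[u uc ->]] /VM [YM|[w wc ->]] nXY.
  - exact: (trivIsetP hMdisj).
  - by rewrite disjoint_sym disjoints1 notcov.
  - by rewrite disjoints1 notcov.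
  - rewrite disjoints1 inE; apply: contra nXY => /eqP ->; by [].
have Ls1 : forall u, Lstar L [set u] = L u by move=> u; rewrite /Lstar big_set1.
have coverM : #|cover M| = 2 * #|M|.
  rewrite -(eqP hMdisj) mulnC -sum_nat_const.
  by apply: eq_bigr => X /hM [].
have Wle : #|Vstar M| <= n - #|M|.
  rewrite /Vstar; apply: leq_trans (cardsU_le _ _) _.
  rewrite card_imset; last exact: set1_inj.
  have := cardsC (cover M); rewrite hV coverM.
  have : #|cover M| <= n by rewrite -hV max_card.
  lia.
have Mge : t3 part M + kcount part 4 <= #|M|.
  set Q := [set i | (psize part i == 3) && has_pair part M i] :|: [set i | psize part i == 4].
  have cQ : #|Q| = t3 part M + kcount part 4.
    rewrite /Q cardsU (_ : _ :&: _ = set0) ?cards0 ?subn0 //.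
    by apply/setP => i; rewrite !inE; case: eqP => [->|] /=; rewrite ?andbF.
  have hp : forall i, i \in Q -> has_pair part M i.
    move=> i; rewrite !inE => /orP [/andP [_ ->] //|/eqP h]; exact: P2.
  pose h := fun i => odflt set0 [pick X in M | X \subset fiber part i].
  have hh : forall i, i \in Q -> h i \in M /\ h i \subset fiber part i.
    move=> i /hp /existsP [X /andP [XM Xs]]; rewrite /h; case: pickP => [Y /andP [YM Ys] //|/(_ X)].
    by rewrite XM Xs.
  rewrite -cQ -(card_in_imset (f := h)).
    apply: subset_leq_card; apply/subsetP => _ /imsetP [i iQ ->]; by case: (hh i iQ).
  move=> i j iQ jQ e.
  case: (hh i iQ) => hiM his; case: (hh j jQ) => _ hjs.
  have [v vh] : exists v, v \in h i.
    by apply/set0Pn/negP => /eqP h0; have := hM _ hiM; rewrite h0 cards0 => -[].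
  have := subsetP his v vh; rewrite e in vh; have := subsetP hjs v vh.
  by rewrite !inE => /eqP <- /eqP.
have [v0 _] := hparts (Ordinal (leq_trans (leqnn 1) hk)).
have : 0 < #|L v0| by apply: leq_trans (hL v0); lia.
case/card_gt0P => c0 _.
apply: (hall c0) => S sSW.
set US := \bigcup_(X in S) Lstar L X.
have LsU : forall X, X \in S -> Lstar L X \subset US by move=> X XS; apply: (bigcup_sup X).
have LsU2 : forall X Y, X \in S -> Y \in S -> #|Lstar L X :|: Lstar L Y| <= #|US|.
  by move=> X Y XS YS; apply: subset_leq_card; rewrite subUset !LsU.
case: (boolP (S \subset M)) => [sSM|].
  case: P8 => g0 [g0L g0i].
  rewrite -(card_in_imset (f := g0) (D := S)); last first.
    by move=> x y /(subsetP sSM) ? /(subsetP sSM) ?; apply: g0i.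
  apply: subset_leq_card; apply/subsetP => _ /imsetP [X XS ->]; apply/bigcupP; exists X => //.
  apply: g0L; exact: (subsetP sSM).
case/subsetPn => X0 X0S X0M.
have cU : c <= #|US|.
  case: (VM X0 (subsetP sSW X0 X0S)) => [XM|[u _ eX0]]; first by rewrite XM in X0M.
  apply: leq_trans (hL u) _; rewrite -Ls1 -eX0; apply: subset_leq_card; exact: LsU.
have SW : #|S| <= #|Vstar M| by apply: subset_leq_card.
case: (boolP [exists i, 2 < #|S :&: Astar part M i|]).
  case/existsP => i /card_gt2P [x [y [z [[xA yA zA] [nxy nyz nzx]]]]].
  move: xA yA zA => /setIP [xS xA] /setIP [yS yA] /setIP [zS zA].
  have nxz : x != z by rewrite eq_sym.
  have := P3 i x y z xA yA zA nxy nxz nyz.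
  have : #|Lstar L x :|: Lstar L y :|: Lstar L z| <= #|US|.
    by apply: subset_leq_card; rewrite !subUset !LsU.
  move=> hu hp3; apply: leq_trans SW (leq_trans Wle _); apply: leq_trans _ hu; apply: leq_trans _ hp3.
  by rewrite -subnDA; apply: leq_sub2l Mge.
rewrite negb_exists => /forallP h2.
have {}h2 : forall i, #|S :&: Astar part M i| <= 2 by move=> i; rewrite leqNgt h2.
set D := [set i | 1 < #|S :&: Astar part M i|].
have SD : #|S| <= k + #|D|.
  have : #|S| <= \sum_i #|S :&: Astar part M i|.
    rewrite -sum1_card.
    have -> : \sum_i #|S :&: Astar part M i| = \sum_i \sum_(X in S) (X \in Astar part M i : nat).
      by apply: eq_bigr => i _; rewrite sum_count; apply: eq_card => X; rewrite !inE.
    rewrite exchange_big /=; apply: leq_sum => X XS.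
    have XW := subsetP sSW X XS.
    have [i Xi] := Xpart X XW.
    by rewrite (bigD1 i) //= inE XW Xi /= leq_addr.
  have : \sum_i #|S :&: Astar part M i| <= \sum_i (1 + (i \in D)).
    apply: leq_sum => i _; rewrite /D inE; have := h2 i; case: ltnP => //=; lia.
  rewrite big_split /= sum_nat_const card_ord muln1 sum_count.
  have -> : #|[set x in predT | x \in D]| = #|D| by apply: eq_card => i; rewrite !inE.
  move=> h1 h3; exact: leq_trans h3 h1.
have Dk : #|D| <= k by have := max_card D; rewrite card_ord.
have pairU : forall i, i \in D -> exists x y, [/\ x \in Astar part M i, y \in Astar part M i,
    x != y & #|Lstar L x :|: Lstar L y| <= #|US|].
  move=> i; rewrite inE => /card_gt1P [x [y [xA yA nxy]]].
  move: xA yA => /setIP [xS xA] /setIP [yS yA].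
  by exists x, y; split => //; apply: LsU2.
have AW : forall i x, x \in Astar part M i -> x \in Vstar M /\ x \subset fiber part i.
  by move=> i x; rewrite inE => /andP [].
have notM : forall i x y, psize part i = 2 -> x \in Astar part M i -> y \in Astar part M i ->
    x != y -> x \notin M.
  move=> i x y p2 /AW [xW xF] /AW [yW yF] nxy; apply/negP => xM.
  have ex : x = fiber part i.
    apply/eqP; rewrite eqEcard xF; have := hM x xM; rewrite /psize in p2; rewrite p2 => -[-> _] //.
  have [w wy] := set0Pn _ (Xne y yW).
  have wx : w \in x by rewrite ex; exact: (subsetP yF).
  by have := disjointFr (disj x y xW yW nxy) wx; rewrite wy.
have two : forall i x y, psize part i = 2 -> x \in Astar part M i -> y \in Astar part M i ->
    x != y -> 2 * c <= #|Lstar L x :|: Lstar L y|.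
  move=> i x y p2 xA yA nxy.
  have xM := notM i x y p2 xA yA nxy.
  have yM := notM i y x p2 yA xA (negbT (introF eqP (fun e => (negP nxy) (introT eqP (esym e))))).
  case: (AW i x xA) => xW xF; case: (AW i y yA) => yW yF.
  case: (VM x xW) => [xM'|[u _ ex]]; first by rewrite xM' in xM.
  case: (VM y yW) => [yM'|[w _ ey]]; first by rewrite yM' in yM.
  rewrite ex ey !Ls1.
  have uw : u != w by apply: contra nxy; rewrite ex ey => /eqP ->.
  have uF : u \in fiber part i by move: xF; rewrite ex sub1set.
  have wF : w \in fiber part i by move: yF; rewrite ey sub1set.
  have eF : [set u; w] = fiber part i.
    apply/eqP; rewrite eqEcard cards2 uw; rewrite /psize in p2; rewrite p2 andbT.
    by apply/subsetP => v /set2P [->|->].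
  have dj : L u :&: L w = set0.
    apply/eqP/negPn/negP => /set0Pn [a /setIP [au aw]].
    apply: (hR [set u; w] i a); first by rewrite eF.
      by move=> v /set2P [->|->].
    by right; split => //; rewrite cards2 uw.
  by rewrite cardsU dj cards0 subn0 mul2n -addnn; apply: leq_add; apply: hL.
have D1 : forall i, i \in D -> psize part i != 1.
  move=> i iD; apply/eqP => p1; have [x [y [xA yA nxy _]]] := pairU i iD.
  have one : forall z, z \in Astar part M i -> z = fiber part i.
    move=> z /AW [zW zF]; apply/eqP; rewrite eqEcard zF; rewrite /psize in p1; rewrite p1 card_gt0; exact: Xne.
  by move: nxy; rewrite (one x xA) (one y yA) eqxx.
case: (boolP [exists i in D, psize part i == 2]) => [/existsP [i /andP [iD /eqP p2]]|no2].
  have [x [y [xA yA nxy hxy]]] := pairU i iD.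
  have h := two i x y p2 xA yA nxy.
  apply: leq_trans SD _; apply: leq_trans _ (leq_trans h hxy).
  exact: ar_two Dk ck.
have D34 : forall i, i \in D -> psize part i = 3 \/ psize part i = 4.
  move=> i iD; apply: ar_34; [exact: psz1|exact: psz4|exact: D1|].
  by apply: contra no2 => p2; apply/existsP; exists i; rewrite iD.
have SDtr : forall b, #|D| <= b -> k + b <= #|US| -> #|S| <= #|US|.
  move=> b Db h; apply: leq_trans SD _; apply: leq_trans _ h; by rewrite leq_add2l.
case: (boolP [exists i in D, (psize part i == 3) && ~~ has_pair part M i]).
  case/existsP => i /and3P [iD /eqP p3 hp].
  have [x [y [xA yA nxy hxy]]] := pairU i iD.
  have h := P4 i x y p3 hp xA yA nxy.
  apply: (SDtr (kcount part 3 + kcount part 4)); last by rewrite addnA; apply: leq_trans h hxy.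
  apply: leq_trans (cardsU_le [set i | psize part i == 3] [set i | psize part i == 4]).
  apply: subset_leq_card; apply/subsetP => j jD; rewrite !inE.
  by case: (D34 j jD) => ->.
move=> noA.
have hpD : forall j, j \in D -> psize part j = 3 -> has_pair part M j.
  move=> j jD p3; apply: contraR noA => hp; apply/existsP; exists j; by rewrite jD p3 eqxx hp.
case: (boolP [exists i in D, i \in Z3]).
  case/existsP => i /andP [iD iZ].
  have [x [y [xA yA nxy hxy]]] := pairU i iD.
  have h := P5 i x y iZ xA yA nxy.
  apply: (SDtr (t3 part M + kcount part 4)); last by rewrite addnA; apply: leq_trans h hxy.
  apply: leq_trans (cardsU_le [set i | (psize part i == 3) && has_pair part M i] [set i | psize part i == 4]).
  apply: subset_leq_card; apply/subsetP => j jD; rewrite !inE.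
  case: (D34 j jD) => [p3|->]; last by rewrite orbT.
  by rewrite p3 eqxx (hpD j jD p3).
move=> noB.
have sZ3 : #|[set i | psize part i == 3] :\: Z3| = kcount part 3 - #|Z3|.
  by rewrite cardsD (setIidPr hZ3).
case: (boolP [exists i in D, psize part i == 3]).
  case/existsP => i /andP [iD /eqP p3].
  have [x [y [xA yA nxy hxy]]] := pairU i iD.
  have h := P6 i x y p3 xA yA nxy.
  apply: (ar_C SD (k3 := kcount part 3) (k4 := kcount part 4) (z3 := #|Z3|)) => //.
    rewrite -sZ3; apply: leq_trans (cardsU_le ([set i | psize part i == 3] :\: Z3) [set i | psize part i == 4]).
    apply: subset_leq_card; apply/subsetP => j jD; rewrite !inE.
    case: (D34 j jD) => [p3'|->]; last by rewrite orbT.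
    rewrite p3' eqxx /= ?andbT ?orbF.
    by apply: contra noB => jZ; apply/existsP; exists j; rewrite jD.
  apply: leq_trans h _; by rewrite leq_mul2l.
move=> noC.
have D4 : forall j, j \in D -> psize part j = 4.
  move=> j jD; case: (D34 j jD) => // p3.
  by move/negP: noC; case; apply/existsP; exists j; rewrite jD p3.
case: (boolP [exists i in D, i \in Z4]).
  case/existsP => i /andP [iD iZ].
  have [x [y [xA yA nxy hxy]]] := pairU i iD.
  have h := P7 i x y iZ xA yA nxy.
  apply: (SDtr (kcount part 4)); last by apply: leq_trans h hxy.
  apply: subset_leq_card; apply/subsetP => j jD; by rewrite inE D4.
move=> noD.
have sZ4 : #|[set i | psize part i == 4] :\: Z4| = kcount part 4 - #|Z4|.
  by rewrite cardsD (setIidPr hZ4).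
apply: (ar_E SD _ hZ4c hkk hnn c3 ck cU).
rewrite -sZ4; apply: subset_leq_card; apply/subsetP => j jD; rewrite !inE D4 // eqxx andbT.
by apply: contra noD => jZ; apply/existsP; exists j; rewrite jD.
Qed.
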